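(* Let $K\subset\mathbb{R}$ be a compact set with $\mathrm{conv}(K)=[a,b]$, and suppose there exists $\varepsilon>0$ such that $[a,a+\varepsilon]\subset K$ or $[b-\varepsilon,b]\subset K$. Then there exists an index $\ell\in\mathbb{N}$, depending only on $\varepsilon$ and $b-a$, such that \[M_o^{\ell}K=M_o^{\ell+k}K\quad\text{for every }k\in\mathbb{N}.\] Moreover, $\ell$ increases with $b-a$ and decreases as $\varepsilon$ increases.
   Context: For $K\subset\mathbb{R}$, the central Minkowski symmetrization is $M_oK=\frac{K-K}{2}=\{\frac{x-y}{2}:x,y\in K\}$, and $M_o^\ell$ denotes $M_o$ applied $\ell$ times. $\mathrm{conv}$ denotes convex hull. *)

(* Defs.v *)
From HB Require Import structures.
From mathcomp Require Import all_boot all_order all_algebra.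
From mathcomp Require Import all_classical all_reals all_analysis.
Set Implicit Arguments. Unset Strict Implicit. Unset Printing Implicit Defensive.
Import Order.TTheory GRing.Theory Num.Theory.
Local Open Scope classical_set_scope.
Local Open Scope ring_scope.

Definition is_convex (R : realType) (C : set R) : Prop :=
  forall x y t, C x -> C y -> 0 <= t -> t <= 1 -> C (t * x + (1 - t) * y).

Definition convex_hull (R : realType) (K : set R) : set R :=
  \bigcap_(C in [set C | is_convex C /\ K `<=` C]) C.

Definition Mo (R : realType) (K : set R) : set R :=
  [set z | exists x y, K x /\ K y /\ z = (x - y) / 2].

Definition Mo_iter (R : realType) (l : nat) (K : set R) : set R := iter l (@Mo R) K.

(* Main.v *)
Require Import Defs.
From HB Require Import structures.
From mathcomp Require Import all_boot all_order all_algebra.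
From mathcomp Require Import all_classical all_reals all_analysis.
From mathcomp Require Import ring lra zify.
Import Order.TTheory GRing.Theory Num.Theory numFieldNormedType.Exports.
Local Open Scope classical_set_scope.
Local Open Scope ring_scope.

Lemma sub_hull (R : realType) (K : set R) : K `<=` convex_hull K.
Proof. by move=> x Kx C [_ KC]; apply: KC. Qed.

Lemma hull_sub (R : realType) (K C : set R) : is_convex C -> K `<=` C ->
  convex_hull K `<=` C.
Proof. by move=> cC KC x; apply; split. Qed.

Lemma endpoint_b (R : realType) (K : set R) (a b : R) : closed K ->
  convex_hull K = `[a, b]%classic -> a <= b -> K b.
Proof.
move=> cK hK ab; apply: cK => B nB.
apply/set0P/negP => /eqP KB0.
move/nbhs_ballP: nB => [e e0 ebB].
pose C := [set x : R | x <= b - e / 2].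
have cC : is_convex C.
  move=> x y t; rewrite /C /= => hx hy t0 t1; nra.
have KC : K `<=` C.
  move=> x Kx; rewrite /C /=.
  have : convex_hull K x by apply: sub_hull.
  rewrite hK /= in_itv /= => /andP[_ xb].
  rewrite leNgt; apply/negP => hx.
  have : (K `&` B) x.
    split => //; apply: ebB; rewrite -ball_normE /= ger0_norm; lra.
  by rewrite KB0.
have : convex_hull K b by rewrite hK /= in_itv /= ab lexx.
move/(@hull_sub _ _ _ cC KC); rewrite /C /= => hb.
have : 0 < e by []. lra.
Qed.

Lemma endpoint_a (R : realType) (K : set R) (a b : R) : closed K ->
  convex_hull K = `[a, b]%classic -> a <= b -> K a.
Proof.
move=> cK hK ab; apply: cK => B nB.
apply/set0P/negP => /eqP KB0.
move/nbhs_ballP: nB => [e e0 ebB].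
pose C := [set x : R | a + e / 2 <= x].
have cC : is_convex C.
  move=> x y t; rewrite /C /= => hx hy t0 t1; nra.
have KC : K `<=` C.
  move=> x Kx; rewrite /C /=.
  have : convex_hull K x by apply: sub_hull.
  rewrite hK /= in_itv /= => /andP[ax _].
  rewrite leNgt; apply/negP => hx.
  have : (K `&` B) x.
    split => //; apply: ebB; rewrite -ball_normE /= ler0_norm; lra.
  by rewrite KB0.
have : convex_hull K a by rewrite hK /= in_itv /= ab lexx.
move/(@hull_sub _ _ _ cC KC); rewrite /C /= => hb.
have : 0 < e by []. lra.
Qed.

Lemma Mo_bound (R : realType) (S : set R) (p w : R) :
  (forall x, S x -> p <= x <= p + w) -> forall z, Mo S z -> `|z| <= w / 2.
Proof.
move=> hS z [x [y [Sx [Sy ->]]]].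
move: (hS _ Sx) (hS _ Sy) => /andP[h1 h2] /andP[h3 h4].
rewrite ler_norml; apply/andP; split; lra.
Qed.

Lemma Mo_I (R : realType) (h : R) : 0 <= h ->
  Mo [set z | `|z| <= h] = [set z | `|z| <= h].
Proof.
move=> h0; apply/seteqP; split.
  have hb := @Mo_bound _ [set z | `|z| <= h] (-h) (2 * h).
  move=> z /hb; rewrite (_ : 2 * h / 2 = h); last by field.
  apply; move=> x /=; rewrite ler_norml => /andP[? ?]; apply/andP; split; lra.
move=> z /= hz; exists z, (- z); split => //; split; first by rewrite /= normrN.
by field.
Qed.
Lemma grid (R : realType) (K : set R) (c rho : R) :
  (forall t, `|t| <= rho -> Mo K (-c + t) /\ Mo K t /\ Mo K (c + t)) ->
  forall n (j : nat) t, (j <= 2 ^ n.+1)%N -> `|t| <= rho ->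
    Mo_iter n.+1 K (-c + c * j%:R / 2 ^+ n + t).
Proof.
move=> h0; elim=> [|n IH] j t hj ht.
  rewrite expr0 divr1; move: (h0 t ht) => [H1 [H2 H3]].
  case: j hj => [|[|[|j]]] // _.
  - by rewrite mulr0 addr0.
  - by rewrite mulr1 addNr add0r.
  - by rewrite (_ : -c + c * 2%:R + t = c + t) //; ring.
have p0 : (2 : R) ^+ n != 0 by rewrite expf_neq0.
change (Mo (Mo_iter n.+1 K) (-c + c * j%:R / 2 ^+ n.+1 + t)).
have htN : `|- t| <= rho by rewrite normrN.
case: (leqP (2 ^ n.+1) j) => hjn.
- exists (-c + c * (j - 2 ^ n.+1)%:R / 2 ^+ n + t), (-c + c * 0%:R / 2 ^+ n + - t).
  split; first by apply: IH => //; rewrite expnS in hj *; lia.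
  split; first by apply: IH => //.
  rewrite natrB // natrX exprS; field; by rewrite p0.
- exists (-c + c * 0%:R / 2 ^+ n + t), (-c + c * (2 ^ n.+1 - j)%:R / 2 ^+ n + - t).
  split; first by apply: IH => //.
  split; first by apply: IH => //; lia.
  rewrite natrB ?(ltnW hjn) // natrX exprS; field; by rewrite p0.
Qed.

Lemma cover (R : realType) (c rho : R) (n : nat) :
  0 < c -> 0 < rho -> c <= rho * 2 ^+ n -> forall z, `|z| <= c + rho ->
  exists (j : nat) t, (j <= 2 ^ n.+1)%N /\ `|t| <= rho /\
    z = -c + c * j%:R / 2 ^+ n + t.
Proof.
move=> c0 r0 hn z; rewrite ler_norml => /andP[z1 z2].
have p0 : (0 : R) < 2 ^+ n by rewrite exprn_gt0.
set p := (2 : R) ^+ n in p0 hn *.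
have P2 : (2 ^ n.+1)%:R = 2 * p :> R by rewrite natrX exprS.
set q := c / p.
have q0 : 0 < q by rewrite divr_gt0.
have qr : q <= rho by rewrite /q ler_pdivrMr.
have cq : c = q * p by rewrite /q mulrVK // unitfE gt_eqF.
have E : forall j : nat, c * j%:R / p = q * j%:R by move=> j; rewrite /q mulrAC.
case: (lerP (z + c) 0) => hu.
  exists 0%N, (z + c); split => //; split; last by rewrite E; ring.
  rewrite ler_norml; apply/andP; split; lra.
case: (lerP (2 * c) (z + c)) => hu2.
  exists (2 ^ n.+1)%N, (z - c); split => //; split.
    rewrite ler_norml; apply/andP; split; lra.
  rewrite P2; field; by rewrite gt_eqF.
set v := (z + c) / q.
have v0 : 0 <= v by rewrite /v divr_ge0 // ltW.
have uv : z + c = q * v by rewrite /v mulrC mulrVK // unitfE gt_eqF.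
move: (truncn_itv v0) => /andP[j1 j2].
set j := Num.truncn v in j1 j2.
exists j, (q * (v - j%:R)); split; last split.
- have : j%:R < (2 ^ n.+1)%:R :> R.
    rewrite P2; apply: (le_lt_trans j1); nra.
  by rewrite ltr_nat => /ltnW.
- rewrite ger0_norm; last nra.
  rewrite -addn1 natrD in j2; nra.
- rewrite E; lra.
Qed.

Theorem lemma13 (R : realType) :
  exists L : R -> R -> nat,
    (* L eps w : the index, a function of eps and the width w = b - a only *)
    (forall eps w1 w2, 0 < eps -> 0 < w1 -> w1 <= w2 -> (L eps w1 <= L eps w2)%N) /\
    (forall eps1 eps2 w, 0 < eps1 -> eps1 <= eps2 -> 0 < w -> (L eps2 w <= L eps1 w)%N) /\
    (forall (K : set R) (a b eps : R),
        compact K ->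
        convex_hull K = `[a, b]%classic ->
        0 < eps ->
        (`[a, a + eps]%classic `<=` K \/ `[b - eps, b]%classic `<=` K) ->
        forall k : nat, Mo_iter (L eps (b - a)) K = Mo_iter (L eps (b - a) + k) K).
Proof.
exists (fun eps w => (Num.truncn (2 * w / eps)).+1).
split.
  move=> eps w1 w2 e0 w0 le; rewrite ltnS; apply: le_truncn.
  apply: ler_wpM2r; [by rewrite invr_ge0 ltW | lra].
split.
  move=> e1 e2 w e0 le w0; rewrite ltnS; apply: le_truncn.
  apply: ler_wpM2l; first lra.
  rewrite lef_pV2 ?posrE //; lra.
move=> K a b eps cK hK e0 hI k; cbv beta.
have clK := compact_closed (@Rhausdorff R) cK.
have Kab : forall x, K x -> a <= x <= b.
  by move=> x /sub_hull; rewrite hK /= in_itv.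
have hab : a + eps <= b.
  case: hI => H.
    have /Kab/andP[_ //] : K (a + eps) by apply: H; rewrite /= in_itv /= lexx; lra.
  have /Kab/andP[? _] : K (b - eps) by apply: H; rewrite /= in_itv /= lexx; lra.
  lra.
set w := b - a.
set c := w / 2 - eps / 4.
set rho := eps / 4.
have h0 : forall t, `|t| <= rho -> Mo K (-c + t) /\ Mo K t /\ Mo K (c + t).
  move=> t; rewrite ler_norml => /andP[t1 t2].
  rewrite /rho in t1 t2.
  have inab : forall x, a <= x <= a + eps -> K x \/ a <= x <= b.
    by move=> x hx; right; move/andP: hx => [? ?]; apply/andP; split; lra.
  case: hI => H.
  - have Kb : K b by apply: (@endpoint_b R K a b clK hK); lra.
    have HK : forall x, a <= x -> x <= a + eps -> K x.
      by move=> x ? ?; apply: H; rewrite /= in_itv /=; apply/andP.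
    split; last split.
    + exists (a + eps / 2 + 2 * t), b; split; first by apply: HK; lra.
      split => //; rewrite /c /w /rho; lra.
    + exists (a + eps / 2 + t), (a + eps / 2 - t); split; first by apply: HK; lra.
      split; first by apply: HK; lra.
      lra.
    + exists b, (a + eps / 2 - 2 * t); split => //.
      split; first by apply: HK; lra.
      rewrite /c /w /rho; lra.
  - have Ka : K a by apply: (@endpoint_a R K a b clK hK); lra.
    have HK : forall x, b - eps <= x -> x <= b -> K x.
      by move=> x ? ?; apply: H; rewrite /= in_itv /=; apply/andP.
    split; last split.
    + exists a, (b - eps / 2 - 2 * t); split => //.
      split; first by apply: HK; lra.
      rewrite /c /w /rho; lra.
    + exists (b - eps / 2 + t), (b - eps / 2 - t); split; first by apply: HK; lra.
      split; first by apply: HK; lra.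
      lra.
    + exists (b - eps / 2 + 2 * t), a; split; first by apply: HK; lra.
      split => //; rewrite /c /w /rho; lra.
set n := Num.truncn (2 * w / eps).
pose I := [set z : R | `|z| <= w / 2].
have bnd : forall m, Mo_iter m.+1 K `<=` I.
  elim=> [|m IH].
    apply: (@Mo_bound _ K a w) => x /Kab /andP[? ?]; apply/andP; split; rewrite /w; lra.
  apply: (@Mo_bound _ _ (- (w / 2)) w) => x /IH; rewrite /I /= ler_norml.
  move=> /andP[? ?]; apply/andP; split; lra.
have Hfull : Mo_iter n.+1 K = I.
  apply/seteqP; split; first exact: bnd.
  have c0 : 0 < c by rewrite /c /w; lra.
  have r0 : 0 < rho by rewrite /rho; lra.
  have hn : c <= rho * 2 ^+ n.
    have h1 := truncnS_gt (2 * w / eps).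
    have h2 : (n.+1)%:R <= (2 : R) ^+ n.
      by rewrite -natrX ler_nat; apply: ltn_expl.
    have h3 : 2 * w / eps < 2 ^+ n by apply: (lt_le_trans h1).
    rewrite ltr_pdivrMr // in h3.
    rewrite /c /rho; nra.
  move=> z hz.
  have hz' : `|z| <= c + rho by rewrite /c /rho; move: hz; rewrite /I /=; lra.
  have [j [t [hj [ht ->]]]] := @cover R c rho n c0 r0 hn z hz'.
  exact: (@grid R K c rho h0 n j t hj ht).
have w0 : 0 <= w / 2 by rewrite /w; lra.
rewrite addnC /Mo_iter iterD -/(Mo_iter n.+1 K) Hfull.
elim: k => [//|k IH]; rewrite iterS -IH.
symmetry; exact: (@Mo_I R _ w0).
Qed.
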